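(* Let $d\ge 3$, $n\ge d+1$ and $2\le k\le d+1$. Then $\chi^{\mathsf{s}}_{d,k}(n)\ge \chi^{\mathsf{s}}_{d,d+1}(n)\ge \lfloor\sqrt{n-d+3}\rfloor+d-3$.
   Context: A $k$-uniform hypergraph $H=(V,E)$ consists of a finite set $V$ and $E\subseteq\binom{V}{k}$. A (linear) embedding of $H$ into $\mathbb{R}^d$ is a map $\phi:V(H)\to\mathbb{R}^d$ with $\dim\operatorname{aff}\phi(e)=k-1$ for every edge $e$ and $\operatorname{conv}\phi(e_1)\cap\operatorname{conv}\phi(e_2)=\operatorname{conv}\phi(e_1\cap e_2)$ for all edges $e_1,e_2$. $\mathcal{E}_{d,k}$ is the set of $k$-uniform hypergraphs admitting such an embedding into $\mathbb{R}^d$. A strong $c$-coloring of $H$ is a map $\kappa:V(H)\to\{1,\dots,c\}$ with $|\kappa(e)|=k$ for every edge $e$; $\chi^{\mathsf{s}}(H)$ is the least such $c$. $\chi^{\mathsf{s}}_{d,k}(n)=\max\{\chi^{\mathsf{s}}(H): H\in\mathcal{E}_{d,k},\ |V(H)|=n\}$. *)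

(* Defs.v *)
From Stdlib Require Import Reals ClassicalEpsilon.
From mathcomp Require Import all_boot.

Set Implicit Arguments.
Unset Strict Implicit.
Unset Printing Implicit Defensive.

Record hypergraph (k : nat) := Hypergraph {
  hv : finType;
  hE : {set {set hv}};
  huni : forall e, e \in hE -> #|e| = k
}.

Section Geometry.
Variables (V : finType) (d : nat).
Implicit Types (phi : V -> 'I_d -> R) (S T : {set V}).

Definition rsum (S : {set V}) (f : V -> R) : R := \big[Rplus/R0]_(v in S) f v.

Definition in_conv phi S (x : 'I_d -> R) : Prop :=
  exists w : V -> R,
    (forall v, Rle R0 (w v)) /\ (forall v, v \notin S -> w v = R0) /\
    rsum S w = R1 /\ (forall i, x i = rsum S (fun v => Rmult (w v) (phi v i))).

Definition aff_indep phi T : Prop :=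
  forall l : V -> R, rsum T l = R0 ->
    (forall i, rsum T (fun v => Rmult (l v) (phi v i)) = R0) ->
    forall v, v \in T -> l v = R0.

Definition aff_dim_eq phi S (m : nat) : Prop :=
  (exists T, T \subset S /\ aff_indep phi T /\ #|T| = m.+1) /\
  (forall T, T \subset S -> aff_indep phi T -> #|T| <= m.+1).

End Geometry.

Definition is_embedding (d k : nat) (H : hypergraph k)
    (phi : hv H -> 'I_d -> R) : Prop :=
  (forall e, e \in hE H -> aff_dim_eq phi e (k - 1)) /\
  (forall e1 e2, e1 \in hE H -> e2 \in hE H ->
     forall x, (in_conv phi e1 x /\ in_conv phi e2 x) <->
               in_conv phi (e1 :&: e2) x).

Definition embeddable (d k : nat) (H : hypergraph k) : Prop :=
  exists phi : hv H -> 'I_d -> R, @is_embedding d k H phi.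

Definition strong_coloring k (H : hypergraph k) c (kappa : hv H -> 'I_c) : bool :=
  [forall e in hE H, #|kappa @: e| == k].

Definition s_colorable k (H : hypergraph k) (c : nat) : bool :=
  [exists kappa : {ffun hv H -> 'I_c}, strong_coloring kappa].

Lemma s_colorable_card k (H : hypergraph k) : s_colorable H #|hv H|.
Proof.
apply/existsP; exists [ffun v => enum_rank v].
apply/forall_inP => e He.
rewrite card_in_imset ?huni //.
by move=> x y _ _; rewrite !ffunE; apply: enum_rank_inj.
Qed.

Lemma s_colorable_ex k (H : hypergraph k) : exists c, s_colorable H c.
Proof. by exists #|hv H|; apply: s_colorable_card. Qed.

Definition chi_s k (H : hypergraph k) : nat := ex_minn (s_colorable_ex H).

Definition pbool (P : Prop) : bool :=
  if excluded_middle_informative P then true else false.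

(* chi^s_{d,k}(n) = max { chi_s H : H ∈ E_{d,k}, |V(H)| = n }.
   Since chi_s H <= |V(H)| = n, the max may be taken over m <= n. *)
Definition chi_s_dk (d k n : nat) : nat :=
  \max_(m < n.+1 | pbool (exists H : hypergraph k,
        #|hv H| = n /\ embeddable d H /\ chi_s H = m)) m.

(* Main.v *)
Require Import Defs.
From Stdlib Require Import Reals.
From mathcomp Require Import all_boot.
From Stdlib Require Import Lra Lia ClassicalEpsilon.

Module B2.

Set Implicit Arguments.
Unset Strict Implicit.
Unset Printing Implicit Defensive.

Local Open Scope R_scope.

Definition lf (x y : R) : R := / (8 * (y - x)).
Definition rg (x y : R) : R := / (8 * (y - x) + 4).
Definition cub (p0 p1 p2 p3 t : R) : R := p0 + p1 * t + p2 * (t * t) + p3 * (t * t * t).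

Definition SEPP (a b c e : nat) (f : R -> R) : Prop :=
 let A := INR a in let B := INR b in let C := INR c in let E := INR e in
 (f A < 0 \/ (f A = 0 /\ (a = c \/ a = e))) /\ (f B < 0 \/ (f B = 0 /\ (b = c \/ b = e))) /\
 f (A + lf A B) < 0 /\ f (B + rg A B) < 0 /\
 (0 < f C \/ (f C = 0 /\ (c = a \/ c = b))) /\ (0 < f E \/ (f E = 0 /\ (e = a \/ e = b))) /\
 0 < f (C + lf C E) /\ 0 < f (E + rg C E).

Lemma SEPP_sym a b c e f : SEPP c e a b f -> SEPP a b c e (fun t => - f t).
Proof.
rewrite /SEPP /=; intuition lra.
Qed.

Lemma SEPP_ext a b c e f g : (forall t, f t = g t) -> SEPP a b c e g -> SEPP a b c e f.
Proof. by move=> H; rewrite /SEPP !H. Qed.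

Lemma lt1 (a b : nat) : (a < b)%N -> INR a + 1 <= INR b.
Proof. by move=> /ltP h; rewrite -S_INR; apply: le_INR. Qed.

Lemma lf_b x y : x + 1 <= y -> 0 < lf x y /\ lf x y <= / 8.
Proof.
move=> h; rewrite /lf; split; first by apply: Rinv_0_lt_compat; lra.
apply: Rinv_le_contravar; lra.
Qed.

Lemma rg_b x y : x + 1 <= y -> 0 < rg x y /\ rg x y <= / 8.
Proof.
move=> h; rewrite /rg; split; first by apply: Rinv_0_lt_compat; lra.
apply: Rinv_le_contravar; lra.
Qed.

Lemma rg_lf x y : x + 1 <= y -> rg x y < lf x y.
Proof. move=> h; rewrite /rg /lf; apply: Rinv_lt_contravar; nra. Qed.

Lemma lf_rg x y z : x + 1 <= y -> y + 1 <= z -> lf x z < rg x y.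
Proof. move=> h h'; rewrite /rg /lf; apply: Rinv_lt_contravar; nra. Qed.

Lemma rg_rg x y z : x + 1 <= y -> y + 1 <= z -> rg x z < rg y z.
Proof. move=> h h'; rewrite /rg; apply: Rinv_lt_contravar; nra. Qed.

Lemma rg_neq_lf (a b e : nat) : (a < b)%N -> (b < e)%N -> rg (INR a) (INR b) <> lf (INR b) (INR e).
Proof.
move=> hab hbe; have h1 := lt1 hab; have h2 := lt1 hbe; rewrite /rg /lf => H.
have H2 : 8 * (INR b - INR a) + 4 = 8 * (INR e - INR b).
  rewrite -(Rinv_inv (8 * (INR b - INR a) + 4)) H Rinv_inv //.
have H3 : INR (Nat.add (Nat.mul 16 b) 4) = INR (Nat.add (Nat.mul 8 a) (Nat.mul 8 e)).
  rewrite !plus_INR /=; lra.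
have := INR_eq _ _ H3; lia.
Qed.

Lemma mpp x y : 0 < x -> 0 < y -> 0 < x * y. Proof. by move=> *; apply: Rmult_lt_0_compat. Qed.
Lemma mnn x y : x < 0 -> y < 0 -> 0 < x * y. Proof. by move=> *; nra. Qed.
Lemma mpn x y : 0 < x -> y < 0 -> x * y < 0. Proof. by move=> *; nra. Qed.
Lemma mnp x y : x < 0 -> 0 < y -> x * y < 0. Proof. by move=> *; nra. Qed.

Ltac sgn := match goal with
 | |- (0 < ?x * ?y)%R => first [apply: mpp; [sgn|sgn] | apply: mnn; [sgn|sgn]]
 | |- (?x * ?y < 0)%R => first [apply: mnp; [sgn|sgn] | apply: mpn; [sgn|sgn]]
 | |- _ => lra
end.

Lemma cub3 r1 r2 r3 : exists p0 p1 p2 p3, forall t, cub p0 p1 p2 p3 t = (t - r1) * (t - r2) * (t - r3).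
Proof.
exists (- (r1 * r2 * r3)), (r1 * r2 + r1 * r3 + r2 * r3), (- (r1 + r2 + r3)), 1.
by move=> t; rewrite /cub; ring.
Qed.

Lemma cub2 r1 r2 : exists p0 p1 p2 p3, forall t, cub p0 p1 p2 p3 t = (t - r1) * (r2 - t).
Proof. exists (- (r1 * r2)), (r1 + r2), (-1), 0; by move=> t; rewrite /cub; ring. Qed.

Lemma cub1 r : exists p0 p1 p2 p3, forall t, cub p0 p1 p2 p3 t = t - r.
Proof. exists (- r), 1, 0, 0; by move=> t; rewrite /cub; ring. Qed.

Ltac facts a b :=
  let h := fresh "h" in
  have h := lt1 (a:=a) (b:=b) ltac:(done);
  have := lf_b h; have := rg_b h; have := rg_lf h.

Definition EXP a b c e := exists p0 p1 p2 p3, SEPP a b c e (cub p0 p1 p2 p3).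

Lemma case_D1 a b c e : (a < b)%N -> (b < c)%N -> (c < e)%N -> EXP a b c e.
Proof.
move=> hab hbc hce; have [p0 [p1 [p2 [p3 hp]]]] := cub1 (INR c - /2).
exists p0, p1, p2, p3; apply: (SEPP_ext (g := fun t => t - (INR c - /2)) hp).
have := lt1 hbc; facts a b; facts c e.
rewrite /SEPP /=; intros; repeat split; try (left; sgn); sgn.
Qed.

Ltac fin := rewrite /SEPP /=; intros; repeat split;
  try (left; sgn; fail); try (right; split; [ring | auto; fail]); try sgn.

Lemma case_D2 a b c e : (a < c)%N -> (c < b)%N -> (b < e)%N -> EXP a b c e.
Proof.
move=> hac hcb hbe.
have [p0 [p1 [p2 [p3 hp]]]] := cub3 (INR c - /2) (INR b - /2) (INR e - /2).
exists p0, p1, p2, p3.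
apply: (SEPP_ext (g := fun t => (t - (INR c - /2)) * (t - (INR b - /2)) * (t - (INR e - /2))) hp).
have := lt1 hac; have := lt1 hcb; have := lt1 hbe.
have hab : (a < b)%N by apply: ltn_trans hcb.
have hce : (c < e)%N by apply: ltn_trans hbe.
facts a b; facts c e; fin.
Qed.

Lemma case_D3 a b c e : (a < c)%N -> (c < e)%N -> (e < b)%N -> EXP a b c e.
Proof.
move=> hac hce heb.
have [p0 [p1 [p2 [p3 hp]]]] := cub2 (INR c - /2) (INR b - /2).
exists p0, p1, p2, p3.
apply: (SEPP_ext (g := fun t => (t - (INR c - /2)) * ((INR b - /2) - t)) hp).
have := lt1 hac; have := lt1 hce; have := lt1 heb.
have hab : (a < b)%N by apply: ltn_trans heb; apply: ltn_trans hce.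
facts a b; facts c e; fin.
Qed.

Lemma case_SL a b e : (a < b)%N -> (b < e)%N -> EXP a b a e.
Proof.
move=> hab hbe.
have [p0 [p1 [p2 [p3 hp]]]] := cub3 (INR a) (INR a + rg (INR a) (INR b)) (INR e - /2).
exists p0, p1, p2, p3.
apply: (SEPP_ext (g := fun t => (t - INR a) * (t - (INR a + rg (INR a) (INR b))) * (t - (INR e - /2))) hp).
have := lt1 hab; have := lt1 hbe.
have hae : (a < e)%N by apply: ltn_trans hbe.
have := lf_rg (lt1 hab) (lt1 hbe).
facts a b; facts a e; fin.
Qed.

Lemma case_SM a b e : (a < b)%N -> (b < e)%N -> EXP a b b e.
Proof.
move=> hab hbe.
have := lt1 hab; have := lt1 hbe.
facts a b; facts b e.
have hne := rg_neq_lf hab hbe.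
set r := INR b + (rg (INR a) (INR b) + lf (INR b) (INR e)) / 2.
have [hlt|hgt] : rg (INR a) (INR b) < lf (INR b) (INR e) \/ lf (INR b) (INR e) < rg (INR a) (INR b).
  by have := Rtotal_order (rg (INR a) (INR b)) (lf (INR b) (INR e)); tauto.
  have [p0 [p1 [p2 [p3 hp]]]] := cub3 (INR b) (INR b) r.
  exists p0, p1, p2, p3.
  apply: (SEPP_ext (g := fun t => (t - INR b) * (t - INR b) * (t - r)) hp).
  rewrite /r; fin.
have [p0 [p1 [p2 [p3 hp]]]] := cub3 (INR b) r (INR e - /2).
exists p0, p1, p2, p3.
apply: (SEPP_ext (g := fun t => (t - INR b) * (t - r) * (t - (INR e - /2))) hp).
rewrite /r; fin.
Qed.

Lemma case_SR a c b : (a < c)%N -> (c < b)%N -> EXP a b c b.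
Proof.
move=> hac hcb.
have hab : (a < b)%N by apply: ltn_trans hcb.
have := lt1 hac; have := lt1 hcb.
facts a b; facts c b.
have := rg_rg (lt1 hac) (lt1 hcb).
set r := INR b + (rg (INR a) (INR b) + rg (INR c) (INR b)) / 2.
have [p0 [p1 [p2 [p3 hp]]]] := cub3 (INR c - /2) (INR b) r.
exists p0, p1, p2, p3.
apply: (SEPP_ext (g := fun t => (t - (INR c - /2)) * (t - INR b) * (t - r)) hp).
rewrite /r; fin.
Qed.

Lemma EXP_sym a b c e : EXP c e a b -> EXP a b c e.
Proof.
move=> [p0 [p1 [p2 [p3 h]]]]; exists (- p0), (- p1), (- p2), (- p3).
apply: (SEPP_ext (g := fun t => - cub p0 p1 p2 p3 t)); first by move=> t; rewrite /cub; ring.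
exact: SEPP_sym.
Qed.

Lemma EXP_lex a b c e : (a < b)%N -> (c < e)%N -> ((a < c)%N \/ (a = c /\ (b < e)%N)) -> EXP a b c e.
Proof.
move=> hab hce [hac|[hac hbe]]; last by rewrite -hac; apply: case_SL.
case: (ltngtP b c) => hbc.
- exact: case_D1.
- case: (ltngtP b e) => hbe.
  + exact: case_D2.
  + exact: case_D3.
  + by rewrite hbe; apply: case_SR.
- by rewrite -hbc; apply: case_SM => //; rewrite hbc.
Qed.

Lemma EXP_all a b c e : (a < b)%N -> (c < e)%N -> (a, b) <> (c, e) -> EXP a b c e.
Proof.
move=> hab hce hne.
case: (ltngtP a c) => hac.
- by apply: EXP_lex => //; left.
- by apply: EXP_sym; apply: EXP_lex => //; left.
- subst c; case: (ltngtP b e) => hbe.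
  + by apply: EXP_lex => //; right.
  + by apply: EXP_sym; apply: EXP_lex => //; right.
  + by subst e.
Qed.

End B2.
Import B2.

Module Helpers.
From mathcomp Require Import all_algebra.
From mathcomp Require Import Rstruct.

Set Implicit Arguments.
Unset Strict Implicit.
Unset Printing Implicit Defensive.

Section Gen.
Variables (V : finType) (d : nat) (phi : V -> 'I_d -> R).
Local Open Scope R_scope.

Definition affF (c0 : R) (c : 'I_d -> R) (x : 'I_d -> R) : R :=
  c0 + \big[Rplus/R0]_(i < d) (c i * x i).

Lemma rsum_lin (S : {set V}) (w : V -> R) c0 c :
  rsum S (fun v => w v * affF c0 c (phi v)) =
  c0 * rsum S w + \big[Rplus/R0]_(i < d) (c i * rsum S (fun v => w v * phi v i)).
Proof.
rewrite /rsum /affF.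
under eq_bigr do rewrite Rmult_plus_distr_l.
rewrite big_split /=. f_equal.
  by rewrite big_distrr /=; apply: eq_bigr => v _; ring.
under eq_bigr do rewrite big_distrr /=.
rewrite exchange_big /=; apply: eq_bigr => i _.
rewrite big_distrr /=; apply: eq_bigr => v _; ring.
Qed.

Lemma rsum_le0 (S : {set V}) f : (forall v, v \in S -> f v <= 0) -> rsum S f <= 0.
Proof.
move=> H; rewrite /rsum; apply: (big_ind (fun x => x <= 0)) => //; try lra.
by move=> x y; lra.
Qed.

Lemma rsum_ge0 (S : {set V}) f : (forall v, v \in S -> 0 <= f v) -> 0 <= rsum S f.
Proof.
move=> H; rewrite /rsum; apply: (big_ind (fun x => 0 <= x)) => //; try lra.
by move=> x y; lra.
Qed.

Lemma rsum_le0_eq0 (S : {set V}) f : (forall v, v \in S -> f v <= 0) -> rsum S f = 0 ->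
  forall v, v \in S -> f v = 0.
Proof.
move=> H Hs v Hv; move: Hs; rewrite /rsum (bigD1 v) //=.
have : \big[Rplus/R0]_(i in S | i != v) f i <= 0.
  apply: (big_ind (fun x => x <= 0)) => //; try lra.
    by move=> x y; lra.
  by move=> i /andP[Hi _]; apply: H.
have := H v Hv; lra.
Qed.

Lemma rsum_sub (S S' : {set V}) f : S' \subset S ->
  (forall v, v \in S -> v \notin S' -> f v = 0) -> rsum S f = rsum S' f.
Proof.
move=> sub H; rewrite /rsum (big_setID S') /= (setIidPr sub).
rewrite [X in _ + X]big1 ?Rplus_0_r // => v; rewrite inE => /andP[h1 h2]; exact: H.
Qed.

Lemma rsum_ext (S : {set V}) f g : (forall v, v \in S -> f v = g v) -> rsum S f = rsum S g.
Proof. by move=> H; apply: eq_bigr. Qed.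

Lemma affF_ext c0 c x y : (forall i, x i = y i) -> affF c0 c x = affF c0 c y.
Proof. by move=> H; rewrite /affF; f_equal; apply: eq_bigr => i _; rewrite H. Qed.

Lemma conv_affF S x c0 c : in_conv phi S x -> exists w,
  (forall v, 0 <= w v) /\ (forall v, v \notin S -> w v = 0) /\ rsum S w = R1 /\
  (forall i, x i = rsum S (fun v => w v * phi v i)) /\
  affF c0 c x = rsum S (fun v => w v * affF c0 c (phi v)).
Proof.
move=> [w [h1 [h2 [h3 h4]]]]; exists w; do 4 (split => //).
rewrite rsum_lin h3 Rmult_1_r /affF; f_equal; apply: eq_bigr => i _; by rewrite h4.
Qed.

Lemma sep_conv (e1 e2 : {set V}) c0 c :
  (forall v, v \in e1 -> affF c0 c (phi v) <= 0 /\ (affF c0 c (phi v) = 0 -> v \in e2)) ->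
  (forall v, v \in e2 -> 0 <= affF c0 c (phi v) /\ (affF c0 c (phi v) = 0 -> v \in e1)) ->
  forall x, (in_conv phi e1 x /\ in_conv phi e2 x) <-> in_conv phi (e1 :&: e2) x.
Proof.
move=> H1 H2 x; split.
  move=> [C1 C2].
  have [w1 [a1 [b1 [s1 [p1 F1]]]]] := conv_affF c0 c C1.
  have [w2 [a2 [b2 [s2 [p2 F2]]]]] := conv_affF c0 c C2.
  have L1 : rsum e1 (fun v => w1 v * affF c0 c (phi v)) <= 0.
    apply: rsum_le0 => v Hv; have [h _] := H1 v Hv; have := a1 v; nra.
  have L2 : 0 <= rsum e2 (fun v => w2 v * affF c0 c (phi v)).
    apply: rsum_ge0 => v Hv; have [h _] := H2 v Hv; have := a2 v; nra.
  have E : rsum e1 (fun v => w1 v * affF c0 c (phi v)) = 0 by lra.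
  have Z : forall v, v \in e1 -> v \notin e2 -> w1 v = 0.
    move=> v Hv Hn.
    have Hle : forall u, u \in e1 -> w1 u * affF c0 c (phi u) <= 0.
      by move=> u Hu; have [h _] := H1 u Hu; have := a1 u; nra.
    have := rsum_le0_eq0 Hle E Hv.
    move=> /= /Rmult_integral [//|h].
    by have [_ h'] := H1 v Hv; rewrite h' in Hn.
  have sub : e1 :&: e2 \subset e1 by apply: subsetIl.
  exists w1; split => //; split.
    move=> v; rewrite inE negb_and => /orP[h|h]; first exact: b1.
    case Hv: (v \in e1); last by apply: b1; rewrite Hv.
    exact: Z.
  split.
    rewrite -s1; symmetry; apply: rsum_sub => // v Hv; rewrite inE Hv /= => Hn.
    exact: Z.
  move=> i; rewrite p1; apply: rsum_sub => // v Hv; rewrite inE Hv /= => Hn.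
  by rewrite Z // Rmult_0_l.
move=> [w [a [b [s p]]]].
have sub1 : e1 :&: e2 \subset e1 by apply: subsetIl.
have sub2 : e1 :&: e2 \subset e2 by apply: subsetIr.
split; exists w; split => //; (split; [move=> v Hv; apply: b; rewrite inE negb_and Hv ?orbT //|]).
  split; first by rewrite (rsum_sub sub1) // => v _ Hn; apply: b.
  by move=> i; rewrite p; symmetry; apply: rsum_sub => // v _ Hn; rewrite b // Rmult_0_l.
split; first by rewrite (rsum_sub sub2) // => v _ Hn; apply: b.
by move=> i; rewrite p; symmetry; apply: rsum_sub => // v _ Hn; rewrite b // Rmult_0_l.
Qed.

Lemma indep_fun (T : {set V}) :
  (forall v0, v0 \in T -> exists c0 c, affF c0 c (phi v0) <> 0 /\
     forall v, v \in T -> v != v0 -> affF c0 c (phi v) = 0) -> aff_indep phi T.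
Proof.
move=> H l Hl Hi v0 Hv0.
have [c0 [c [Hne Hz]]] := H v0 Hv0.
have := rsum_lin T l c0 c; rewrite Hl.
rewrite big1; last by move=> i _; rewrite Hi Rmult_0_r.
rewrite Rmult_0_r Rplus_0_r /rsum (bigD1 v0) //= big1; last first.
  by move=> v /andP[h1 h2]; rewrite Hz // Rmult_0_r.
rewrite Rplus_0_r => /Rmult_integral [//|//].
Qed.

End Gen.

Set Implicit Arguments.
Unset Strict Implicit.
Unset Printing Implicit Defensive.

Section P1.
Variables (V : finType) (d : nat) (phi : V -> 'I_d -> R).
Local Open Scope R_scope.

Lemma conv_mono (S S' : {set V}) x : S \subset S' -> in_conv phi S x -> in_conv phi S' x.
Proof.
move=> sub [w [a [b [s p]]]].
have z : forall v, v \in S' -> v \notin S -> forall g, w v * g = 0.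
  by move=> v _ h g; rewrite b // Rmult_0_l.
exists w; split => //; split.
  by move=> v h; apply: b; apply: contra h; apply: (subsetP sub).
split; first by rewrite (rsum_sub sub) // => v _ h; apply: b.
by move=> i; rewrite p (rsum_sub sub) // => v hv h; apply: z.
Qed.

Lemma indep_sub (T T' : {set V}) : T' \subset T -> aff_indep phi T -> aff_indep phi T'.
Proof.
move=> sub H l Hl Hi v Hv.
pose l' := fun u => if u \in T' then l u else R0.
have E : forall g, rsum T (fun u => l' u * g u) = rsum T' (fun u => l u * g u).
  move=> g; rewrite (rsum_sub sub); last by move=> u _ h; rewrite /l' (negbTE h) Rmult_0_l.
  by apply: rsum_ext => u hu; rewrite /l' hu.
have E0 : rsum T l' = rsum T' l.
  rewrite (rsum_sub sub); last by move=> u _ h; rewrite /l' (negbTE h).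
  by apply: rsum_ext => u hu; rewrite /l' hu.
have := H l' _ _ v (subsetP sub v Hv); rewrite /l' Hv; apply.
  by rewrite E0.
by move=> i; rewrite E.
Qed.

Lemma bary_unique (e : {set V}) w1 w2 : aff_indep phi e ->
  (forall v, v \notin e -> w1 v = 0) -> (forall v, v \notin e -> w2 v = 0) ->
  rsum e w1 = R1 -> rsum e w2 = R1 ->
  (forall i, rsum e (fun v => w1 v * phi v i) = rsum e (fun v => w2 v * phi v i)) ->
  forall v, v \in e -> w1 v = w2 v.
Proof.
move=> H _ _ s1 s2 p v hv.
have dB : forall f g, rsum e (fun u => f u - g u) = rsum e f - rsum e g.
  by move=> f g; rewrite /rsum; exact: GRing.sumrB.
have h1 : rsum e (fun u => w1 u - w2 u) = R0 by rewrite dB s1 s2; lra.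
have h2 : forall i, rsum e (fun u => (w1 u - w2 u) * phi u i) = R0.
  move=> i; have := p i => h.
  rewrite (@rsum_ext _ e _ (fun u => w1 u * phi u i - w2 u * phi u i)); last by move=> u _; ring.
  by rewrite dB h; lra.
have := H (fun u => w1 u - w2 u) h1 h2 v hv; lra.
Qed.

Lemma dim_indep (e : {set V}) K : #|e| = K -> (0 < K)%N -> aff_dim_eq phi e (K - 1) -> aff_indep phi e.
Proof.
move=> hc hK [[T [sub [ind cT]]] _].
have eT : e = T.
  apply/eqP; rewrite eq_sym eqEcard sub hc cT subn1 prednK //=.
by rewrite eT.
Qed.

End P1.

Lemma pboolP (P : Prop) : pbool P = true <-> P.
Proof. by rewrite /pbool; case: excluded_middle_informative. Qed.

Lemma chi_sP k (H : hypergraph k) : s_colorable H (chi_s H) /\ forall c, s_colorable H c -> (chi_s H <= c)%N.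
Proof. by rewrite /chi_s; case: ex_minnP. Qed.

Lemma chi_s_le k (H : hypergraph k) : (chi_s H <= #|hv H|)%N.
Proof. by have [_ h] := chi_sP H; apply: h; apply: s_colorable_card. Qed.

Lemma chi_s_dk_ge d k n (H : hypergraph k) : #|hv H| = n -> embeddable d H ->
  (chi_s H <= chi_s_dk d k n)%N.
Proof.
move=> hn he; rewrite /chi_s_dk.
have hlt : (chi_s H < n.+1)%N by rewrite ltnS -hn chi_s_le.
apply: (@leq_bigmax_cond _ _ (fun m : 'I_n.+1 => nat_of_ord m) (Ordinal hlt)).
by apply/pboolP; exists H.
Qed.

Lemma sub_pair (T : finType) (e : {set T}) x y k : x \in e -> y \in e -> x != y ->
  (2 <= k)%N -> (k <= #|e|)%N -> exists e' : {set T}, [/\ x \in e', y \in e', e' \subset e & #|e'| = k].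
Proof.
move=> hx hy hxy hk hke.
pose Rs := e :\: [set x; y].
have cR : #|Rs| = (#|e| - 2)%N.
  have : [set x; y] \subset e by apply/subsetP => z; rewrite !inE => /orP[]/eqP->.
  move=> s; rewrite cardsD (setIidPr s) cards2 hxy //.
pose A := [set z in take (k - 2) (enum Rs)].
have cA : #|A| = (k - 2)%N.
  rewrite cardsE (card_uniqP _) ?take_uniq ?enum_uniq // size_takel //.
  by rewrite -cardE cR; apply: leq_sub2r.
have sA : A \subset Rs.
  by apply/subsetP => z; rewrite inE => /mem_take; rewrite mem_enum.
have ny : y \notin A by apply/negP => /(subsetP sA); rewrite !inE eqxx orbT.
have nx : x \notin y |: A.
  rewrite in_setU1 negb_or hxy /=; by apply/negP => /(subsetP sA); rewrite !inE eqxx.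
exists (x |: (y |: A)); split.
- by rewrite in_setU1 eqxx.
- by rewrite !in_setU1 eqxx orbT.
- apply/subsetP => z; rewrite !in_setU1 => /orP[/eqP->//|/orP[/eqP->//|]].
  by move=> /(subsetP sA); rewrite inE => /andP[].
- rewrite cardsU1 cardsU1 cA ny nx /= add1n add1n.
  by rewrite -addn2 subnK.
Qed.

Section Skel.
Variables (K k : nat) (H : hypergraph K).
Local Open Scope R_scope.

Definition skelE : {set {set hv H}} :=
  [set e' : {set hv H} | [exists e in hE H, e' \subset e] && (#|e'| == k)].

Lemma skel_uni e : e \in skelE -> #|e| = k.
Proof. by rewrite inE => /andP[_ /eqP]. Qed.

Definition skel : hypergraph k := @Hypergraph k (hv H) skelE skel_uni.

Lemma skel_embed d phi : (0 < K)%N -> (0 < k)%N -> @is_embedding d K H phi ->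
  @is_embedding d k skel phi.
Proof.
move=> hK hk [D I].
have ind : forall e, e \in hE H -> aff_indep phi e.
  by move=> e he; apply: (dim_indep (huni he) hK (D e he)).
have sk : forall e', e' \in hE skel -> exists2 e, e \in hE H & e' \subset e.
  by move=> e'; rewrite inE => /andP[/exists_inP[e h1 h2] _]; exists e.
split.
  move=> e' he'; have [e he sub] := sk e' he'.
  have ce' : #|e'| = k by apply: skel_uni.
  split.
    exists e'; split => //; split; first exact: (indep_sub sub (ind e he)).
    by rewrite ce' subn1 prednK.
  by move=> T sT _; apply: leq_trans (subset_leq_card sT) _; rewrite ce' subn1 prednK.
move=> e1' e2' he1' he2' x.
have [e1 he1 sub1] := sk e1' he1'; have [e2 he2 sub2] := sk e2' he2'.
split; last first.
  move=> h; split; apply: conv_mono h; [exact: subsetIl | exact: subsetIr].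
move=> [C1 C2].
have C1' := conv_mono sub1 C1; have C2' := conv_mono sub2 C2.
have [w3 [a3 [b3 [s3 p3]]]] := (proj1 (I e1 e2 he1 he2 x)) (conj C1' C2').
move: C1 C2 => [w1 [a1 [b1 [s1 p1]]]] [w2 [a2 [b2 [s2 p2]]]].
have z1 : forall v, v \in e1 -> v \notin e1' -> w1 v = 0 by move=> v _; apply: b1.
have z2 : forall v, v \in e2 -> v \notin e2' -> w2 v = 0 by move=> v _; apply: b2.
have zw1 : forall v, v \notin e1 -> w1 v = 0.
  by move=> v h; apply: b1; apply: contra h; apply: (subsetP sub1).
have zw2 : forall v, v \notin e2 -> w2 v = 0.
  by move=> v h; apply: b2; apply: contra h; apply: (subsetP sub2).
have s13 : forall v, v \in e1 :&: e2 -> v \notin e1 -> w3 v = 0.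
  by move=> v; rewrite inE => /andP[->].
have zw3a : forall v, v \notin e1 -> w3 v = 0.
  by move=> v h; apply: b3; rewrite inE (negbTE h).
have zw3b : forall v, v \notin e2 -> w3 v = 0.
  by move=> v h; apply: b3; rewrite inE (negbTE h) andbF.
have sI1 : e1 :&: e2 \subset e1 by apply: subsetIl.
have sI2 : e1 :&: e2 \subset e2 by apply: subsetIr.
have E13 : forall v, v \in e1 -> w1 v = w3 v.
  apply: (bary_unique (ind e1 he1)) => //.
  - by rewrite (rsum_sub sub1).
  - by rewrite (rsum_sub sI1) // => v _ h; apply: b3.
  - move=> i; rewrite (rsum_sub sub1) ?(rsum_sub sI1) -?p1 -?p3 //.
      by move=> v _ h; rewrite b3 // Rmult_0_l.
    by move=> v hv h; rewrite z1 // Rmult_0_l.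
have E23 : forall v, v \in e2 -> w2 v = w3 v.
  apply: (bary_unique (ind e2 he2)) => //.
  - by rewrite (rsum_sub sub2).
  - by rewrite (rsum_sub sI2) // => v _ h; apply: b3.
  - move=> i; rewrite (rsum_sub sub2) ?(rsum_sub sI2) -?p2 -?p3 //.
      by move=> v _ h; rewrite b3 // Rmult_0_l.
    by move=> v hv h; rewrite z2 // Rmult_0_l.
have Z : forall v, v \notin e1' :&: e2' -> w1 v = 0.
  move=> v; rewrite inE negb_and => /orP[h|h]; first exact: b1.
  case h1: (v \in e1'); last by apply: b1; rewrite h1.
  have ve1 : v \in e1 by apply: (subsetP sub1).
  rewrite E13 //.
  case h2: (v \in e2).
    by rewrite -E23 //; apply: b2.
  by apply: zw3b; rewrite h2.
have sub' : e1' :&: e2' \subset e1' by apply: subsetIl.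
exists w1; split => //; split => //; split.
  by rewrite -s1; symmetry; apply: rsum_sub => // v _ h; apply: Z.
by move=> i; rewrite p1; apply: rsum_sub => // v _ h; rewrite Z // Rmult_0_l.
Qed.

Lemma skel_color c : (2 <= k)%N -> (k <= K)%N -> s_colorable skel c -> s_colorable H c.
Proof.
move=> hk hkK /existsP[kappa /forall_inP Hk]; apply/existsP; exists kappa.
apply/forall_inP => e he; apply/eqP; transitivity #|e|; last exact: huni he.
apply: card_in_imset => x y hx hy hxy; apply/eqP; apply/negP => /negP nxy.
have hke : (k <= #|e|)%N by rewrite (huni he).
have [e' [x' y' s' c']] := sub_pair hx hy nxy hk hke.
have he' : e' \in hE skel by rewrite inE c' eqxx andbT; apply/exists_inP; exists e.
have := Hk e' he' => /eqP E.
have inj : {in e' &, injective kappa} by apply/imset_injP; rewrite E c'.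
by move: (inj x y x' y' hxy) => /eqP; rewrite (negbTE nxy).
Qed.

Lemma skel_chi : (2 <= k)%N -> (k <= K)%N -> (chi_s H <= chi_s skel)%N.
Proof.
move=> hk hkK; have [h _] := chi_sP skel; have [_ h'] := chi_sP H.
by apply: h'; apply: skel_color.
Qed.

End Skel.

Lemma part1 d k n : (2 <= k)%N -> (k <= d.+1)%N -> (chi_s_dk d d.+1 n <= chi_s_dk d k n)%N.
Proof.
move=> hk hkd; rewrite {1}/chi_s_dk; apply/bigmax_leqP => m /pboolP [H [hn [[phi he] hc]]].
rewrite -hc; apply: leq_trans (skel_chi H hk hkd) _.
apply: chi_s_dk_ge => //; exists phi; apply: skel_embed => //.
by apply: leq_trans hk.
Qed.

Set Implicit Arguments.
Unset Strict Implicit.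
Unset Printing Implicit Defensive.

Section Func.
Variable d' : nat.
Local Notation d := d'.+3.
Local Open Scope R_scope.

Definition mc (t : R) (i : 'I_d) : R :=
  if val i == 0%N then t else if val i == 1%N then t * t else
  if val i == 2%N then t * t * t else 0.

Definition ap (j : 'I_d') (i : 'I_d) : R := if val i == (j + 3)%N then 1 else 0.

Definition cubc (p0 p1 p2 p3 : R) (i : 'I_d) : R :=
  if val i == 0%N then p1 else if val i == 1%N then p2 else
  if val i == 2%N then p3 else - p0.

Lemma sum_d (c x : 'I_d -> R) :
  \big[Rplus/R0]_(i < d) (c i * x i) =
  c (@Ordinal d 0 isT) * x (@Ordinal d 0 isT) + (c (@Ordinal d 1 isT) * x (@Ordinal d 1 isT) +
  (c (@Ordinal d 2 isT) * x (@Ordinal d 2 isT) +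
   \big[Rplus/R0]_(j < d') (c (rshift 3 j) * x (rshift 3 j)))).
Proof.
rewrite big_ord_recl big_ord_recl big_ord_recl.
congr (c _ * x _ + (c _ * x _ + (c _ * x _ + _))); try (by apply: val_inj).
by apply: eq_bigr => j _; congr (c _ * x _); apply: val_inj.
Qed.

Lemma cub_mc p0 p1 p2 p3 t :
  affF p0 (cubc p0 p1 p2 p3) (mc t) = p0 + p1 * t + p2 * (t * t) + p3 * (t * t * t).
Proof.
rewrite /affF sum_d /cubc /mc /= big1; first ring.
by move=> j _; rewrite /= Rmult_0_r.
Qed.

Lemma cub_ap p0 p1 p2 p3 j : affF p0 (cubc p0 p1 p2 p3) (ap j) = 0.
Proof.
rewrite /affF sum_d /cubc /ap /= (bigD1 j) //= big1.
  rewrite !addn3 add3n eqxx /=; ring.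
move=> i /negbTE hij; have h : (val i == val j) = false by rewrite val_eqE.
rewrite !addn3 add3n !eqSS h; ring.
Qed.

Definition apc (j : 'I_d') (i : 'I_d) : R := if val i == (j + 3)%N then 1 else 0.

Lemma apc_mc j t : affF 0 (apc j) (mc t) = 0.
Proof.
rewrite /affF sum_d /apc /mc /= !addn3 /= big1; first ring.
by move=> i _; rewrite /= Rmult_0_r.
Qed.

Lemma apc_ap j j' : affF 0 (apc j) (ap j') = if j' == j then 1 else 0.
Proof.
rewrite /affF sum_d /apc /ap /= !addn3 /=.
rewrite (bigD1 j) //= big1.
  rewrite add3n eqxx !eqSS.
  have -> : (val j == val j') = (j' == j) by rewrite val_eqE eq_sym.
  case: (j' == j); ring.
move=> i /negbTE hij; have h : (val i == val j) = false by rewrite val_eqE.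
rewrite add3n !eqSS h; ring.
Qed.

Lemma affF_opp c0 (c : 'I_d -> R) x : affF (- c0) (fun i => - c i) x = - affF c0 c x.
Proof.
rewrite /affF Ropp_plus_distr; f_equal.
rewrite /= (big_morph Ropp (id1 := R0) (op1 := Rplus)); first by apply: eq_bigr => i _; ring.
  by move=> u v; ring.
by rewrite Ropp_0.
Qed.

End Func.

Set Implicit Arguments.
Unset Strict Implicit.
Unset Printing Implicit Defensive.

Section Constr.
Variables (m d' p : nat).
Local Notation d := d'.+3.

Definition XT := {q : 'I_m * 'I_m | q.1 != q.2}.
Definition VT := ((('I_m + XT) + 'I_d') + 'I_p)%type.

Definition vC (i : 'I_m) : VT := inl (inl (inl i)).
Definition vX (q : XT) : VT := inl (inl (inr q)).
Definition vA (j : 'I_d') : VT := inl (inr j).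

Local Open Scope R_scope.

Definition tX (q : XT) : R :=
  let a := INR (val q).1 in let b := INR (val q).2 in
  if ((val q).1 < (val q).2)%N then a + lf a b else a + rg b a.

Definition tau (v : VT) : R :=
  match v with
  | inl (inl (inl i)) => INR i
  | inl (inl (inr q)) => tX q
  | _ => 0
  end.

Definition isA (v : VT) : bool := if v is inl (inr _) then true else false.

Definition phiT (v : VT) : 'I_d -> R :=
  match v with
  | inl (inl _) => mc (tau v)
  | inl (inr j) => ap j
  | inr _ => fun _ => 0
  end.

Definition inEd (a b : 'I_m) (v : VT) : bool :=
  match v with
  | inl (inl (inl i)) => (i == a) || (i == b)
  | inl (inl (inr q)) => (val q == (a, b)) || (val q == (b, a))
  | inl (inr _) => true
  | inr _ => false
  end.

Definition Ed (a b : 'I_m) : {set VT} := [set v | inEd a b v].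

Lemma Ed_cases a b v : v \in Ed a b ->
  v = vC a \/ v = vC b \/ (exists q : XT, v = vX q /\ val q = (a, b)) \/
  (exists q : XT, v = vX q /\ val q = (b, a)) \/ isA v.
Proof.
rewrite inE; case: v => [[[i|q]|j]|z] //=.
- by case/orP => /eqP ->; auto.
- by case/orP => /eqP h; [do 2 right; left | do 3 right; left]; exists q.
- by move=> _; do 4 right.
Qed.

Lemma tX_ab (q : XT) (a b : 'I_m) : val q = (a, b) -> (a < b)%N -> tX q = INR a + lf (INR a) (INR b).
Proof. by move=> h hab; rewrite /tX h /= hab. Qed.

Lemma tX_ba (q : XT) (a b : 'I_m) : val q = (b, a) -> (a < b)%N -> tX q = INR b + rg (INR a) (INR b).
Proof. by move=> h hab; rewrite /tX h /= ltnNge (ltnW hab). Qed.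

Lemma isA_ex v : isA v -> exists j, v = vA j.
Proof. by case: v => [[[i|q]|j]|z] //= _; exists j. Qed.

Lemma base_fun (e : {set VT}) v0 s0 s1 s2 s3 :
  s0 <> s1 -> s0 <> s2 -> s0 <> s3 -> phiT v0 = mc s0 ->
  (forall v, v \in e -> v <> v0 -> isA v \/ (phiT v = mc (tau v) /\ (tau v = s1 \/ tau v = s2 \/ tau v = s3))) ->
  exists c0 c, affF c0 c (phiT v0) <> 0 /\ forall v, v \in e -> v != v0 -> affF c0 c (phiT v) = 0.
Proof.
move=> h1 h2 h3 hv0 H.
have [p0 [p1 [p2 [p3 hp]]]] := cub3 s1 s2 s3.
exists p0, (cubc p0 p1 p2 p3); split.
  rewrite hv0 cub_mc -/(cub p0 p1 p2 p3 s0) hp.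
  apply: Rmult_integral_contrapositive_currified; last by lra.
  apply: Rmult_integral_contrapositive_currified; lra.
move=> v hv /eqP hne; case: (H v hv hne) => [/isA_ex [j ->]|[-> ht]].
  exact: cub_ap.
rewrite cub_mc -/(cub p0 p1 p2 p3 (tau v)) hp.
by case: ht => [->|[->|->]]; ring.
Qed.

Lemma indep_gen (e : {set VT}) t1 t2 t3 t4 :
  t1 <> t2 -> t1 <> t3 -> t1 <> t4 -> t2 <> t3 -> t2 <> t4 -> t3 <> t4 ->
  (forall v, v \in e -> isA v \/ (~~ isA v /\ phiT v = mc (tau v) /\
      (tau v = t1 \/ tau v = t2 \/ tau v = t3 \/ tau v = t4))) ->
  (forall u v, u \in e -> v \in e -> ~~ isA u -> ~~ isA v -> tau u = tau v -> u = v) ->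
  aff_indep phiT e.
Proof.
move=> d12 d13 d14 d23 d24 d34 H Hinj; apply: indep_fun => v0 hv0.
case: (H v0 hv0) => [hA|[nA0 [hp0 ht0]]].
  have [j ej] := isA_ex hA; subst v0.
  exists 0, (apc j); split; first by rewrite /= apc_ap eqxx; lra.
  move=> v hv hne; case: (H v hv) => [/isA_ex [j' ej']|[_ [-> _]]]; last exact: apc_mc.
  subst v; rewrite /= apc_ap; case: eqP => // ejj; by subst; rewrite eqxx in hne.
have oth : forall v, v \in e -> v <> v0 -> isA v \/ (phiT v = mc (tau v) /\ tau v <> tau v0 /\
     (tau v = t1 \/ tau v = t2 \/ tau v = t3 \/ tau v = t4)).
  move=> v hv hne; case: (H v hv) => [h|[nA [h1 h2]]]; [by left | right; split => //; split => //].
  by move=> et; apply: hne; apply: Hinj.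
case: ht0 => [e0|[e0|[e0|e0]]]; rewrite e0 in hp0 oth.
- apply: (base_fun (s1 := t2) (s2 := t3) (s3 := t4)) hp0 _ => // v hv hne.
  case: (oth v hv hne) => [h|[h1 [h2 h3]]]; [by left|right; split => //; intuition].
- apply: (base_fun (s1 := t1) (s2 := t3) (s3 := t4)) hp0 _ => //; try (by auto).
  move=> v hv hne.
  case: (oth v hv hne) => [h|[h1 [h2 h3]]]; [by left|right; split => //; intuition].
- apply: (base_fun (s1 := t1) (s2 := t2) (s3 := t4)) hp0 _ => //; try (by auto).
  move=> v hv hne.
  case: (oth v hv hne) => [h|[h1 [h2 h3]]]; [by left|right; split => //; intuition].
- apply: (base_fun (s1 := t1) (s2 := t2) (s3 := t3)) hp0 _ => //; try (by auto).
  move=> v hv hne.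
  case: (oth v hv hne) => [h|[h1 [h2 h3]]]; [by left|right; split => //; intuition].
Qed.


Lemma lt1o (a b : 'I_m) : (a < b)%N -> INR a + 1 <= INR b.
Proof. exact: lt1. Qed.

Lemma Ed_base (a b : 'I_m) v : (a < b)%N -> v \in Ed a b -> isA v \/ (~~ isA v /\ phiT v = mc (tau v) /\
   (tau v = INR a \/ tau v = INR b \/ tau v = INR a + lf (INR a) (INR b) \/ tau v = INR b + rg (INR a) (INR b))).
Proof.
move=> hab hv; case: (Ed_cases hv) => [->|[->|[[q [-> hq]]|[[q [-> hq]]|hA]]]].
- by right; split => //; split => //; left.
- by right; split => //; split => //; right; left.
- by right; split => //; split => //; rewrite /= (tX_ab hq hab); do 2 right; left.
- by right; split => //; split => //; rewrite /= (tX_ba hq hab); do 3 right.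
- by left.
Qed.

Lemma Ed_inj (a b : 'I_m) u v : (a < b)%N -> u \in Ed a b -> v \in Ed a b -> ~~ isA u -> ~~ isA v ->
  tau u = tau v -> u = v.
Proof.
move=> hab hu hv nu nv et.
have h := lt1o hab; have := lf_b h; have := rg_b h.
case: (Ed_cases hu) => [eu|[eu|[[q [eu hq]]|[[q [eu hq]]|hA]]]];
 try (by rewrite hA in nu); subst u;
case: (Ed_cases hv) => [ev|[ev|[[q' [ev hq']]|[[q' [ev hq']]|hA']]]];
 try (by rewrite hA' in nv); subst v => //=; move: et => /=;
 rewrite ?(tX_ab hq hab) ?(tX_ba hq hab) ?(tX_ab hq' hab) ?(tX_ba hq' hab); intros; try lra;
 congr vX; apply: val_inj; by rewrite hq hq'.
Qed.

Lemma Ed_indep (a b : 'I_m) : (a < b)%N -> aff_indep phiT (Ed a b).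
Proof.
move=> hab; have h := lt1o hab; have := lf_b h; have := rg_b h => h1 h2.
apply: (@indep_gen _ (INR a) (INR b) (INR a + lf (INR a) (INR b)) (INR b + rg (INR a) (INR b)));
  try lra.
- by move=> v hv; apply: (Ed_base hab hv).
- by move=> u v hu hv; apply: (Ed_inj hab hu hv).
Qed.


Definition Aps : {set VT} := [set vA j | j in 'I_d'].

Lemma in_Aps v : (v \in Aps) = isA v.
Proof.
case: v => [[[i|q]|j]|z] /=.
- by apply/imsetP => [[j _ ]].
- by apply/imsetP => [[j _ ]].
- by apply/imsetP; exists j.
- by apply/imsetP => [[j _ ]].
Qed.

Lemma eqC i j : (vC i == vC j) = (i == j).
Proof. by apply/eqP/eqP => [[]|->]. Qed.
Lemma eqX i j : (vX i == vX j) = (val i == val j).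
Proof. rewrite val_eqE; by apply/eqP/eqP => [[]|->]. Qed.

Lemma card_Ed (a b : 'I_m) : (a < b)%N -> #|Ed a b| = d'.+4.
Proof.
move=> hab.
have nab : a != b by rewrite -val_eqE /= neq_ltn hab.
have nba : b != a by rewrite eq_sym.
pose q1 : XT := exist _ (a, b) nab.
pose q2 : XT := exist _ (b, a) nba.
have -> : Ed a b = vC a |: (vC b |: (vX q1 |: (vX q2 |: Aps))).
  apply/setP => v; rewrite !in_setU1 in_Aps inE.
  case: v => [[[i|q]|j]|z] //=.
  - by rewrite -/(vC i) !eqC orbF.
  - by rewrite -/(vX q) !eqX orbF.
rewrite !cardsU1 !in_setU1 !in_Aps /= card_imset; last by move=> x y [].
rewrite card_ord.
rewrite eqC (negbTE nab) eqX /= -pair_eqE /= (negbTE nab) /=.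
done.
Qed.


Lemma Ed_side (a b c e : 'I_m) p0 p1 p2 p3 (sg : R) : (a < b)%N ->
  (sg * cub p0 p1 p2 p3 (INR a) < 0 \/ (cub p0 p1 p2 p3 (INR a) = 0 /\ (val a = val c \/ val a = val e))) ->
  (sg * cub p0 p1 p2 p3 (INR b) < 0 \/ (cub p0 p1 p2 p3 (INR b) = 0 /\ (val b = val c \/ val b = val e))) ->
  sg * cub p0 p1 p2 p3 (INR a + lf (INR a) (INR b)) < 0 ->
  sg * cub p0 p1 p2 p3 (INR b + rg (INR a) (INR b)) < 0 ->
  forall v, v \in Ed a b -> sg * affF p0 (cubc p0 p1 p2 p3) (phiT v) <= 0 /\
     (affF p0 (cubc p0 p1 p2 p3) (phiT v) = 0 -> v \in Ed c e).
Proof.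
move=> hab hA hB hX1 hX2 v hv.
case: (Ed_cases hv) => [->|[->|[[q [-> hq]]|[[q [-> hq]]|hA']]]].
- rewrite /= cub_mc -/(cub p0 p1 p2 p3 _).
  case: hA => [h|[h1 h2]]; first by split; [lra | move=> h'; rewrite h' in h; lra].
  rewrite h1; split; first lra.
  move=> _; rewrite inE /=; case: h2 => /val_inj ->; by rewrite eqxx ?orbT.
- rewrite /= cub_mc -/(cub p0 p1 p2 p3 _).
  case: hB => [h|[h1 h2]]; first by split; [lra | move=> h'; rewrite h' in h; lra].
  rewrite h1; split; first lra.
  move=> _; rewrite inE /=; case: h2 => /val_inj ->; by rewrite eqxx ?orbT.
- rewrite /= cub_mc -/(cub p0 p1 p2 p3 _) (tX_ab hq hab).
  by split; [lra | move=> h'; rewrite h' in hX1; lra].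
- rewrite /= cub_mc -/(cub p0 p1 p2 p3 _) (tX_ba hq hab).
  by split; [lra | move=> h'; rewrite h' in hX2; lra].
- have [j ->] := isA_ex hA'; rewrite cub_ap; split; first lra.
  by move=> _; rewrite inE.
Qed.

Lemma Ed_sep (a b c e : 'I_m) : (a < b)%N -> (c < e)%N -> forall x,
  (in_conv phiT (Ed a b) x /\ in_conv phiT (Ed c e) x) <-> in_conv phiT (Ed a b :&: Ed c e) x.
Proof.
move=> hab hce x.
case: (boolP ((val a == val c) && (val b == val e))) => [/andP[/eqP/val_inj -> /eqP/val_inj ->]|hne].
  by rewrite setIid; tauto.
have hne' : (val a, val b) <> (val c, val e).
  by move=> [h1 h2]; apply: (negP hne); apply/andP; split; apply/eqP; [exact: h1 | exact: h2].
have [p0 [p1 [p2 [p3 S]]]] := EXP_all hab hce hne'.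
move: S; rewrite /SEPP /= => [[s1 [s2 [s3 [s4 [s5 [s6 [s7 s8]]]]]]]].
apply: (sep_conv (c0 := p0) (c := cubc p0 p1 p2 p3)).
- move=> v hv.
  have t1 : 1 * cub p0 p1 p2 p3 (INR a) < 0 \/ (cub p0 p1 p2 p3 (INR a) = 0 /\ (val a = val c \/ val a = val e)).
    by case: s1 => [h|[h1 h2]]; [left; lra | right].
  have t2 : 1 * cub p0 p1 p2 p3 (INR b) < 0 \/ (cub p0 p1 p2 p3 (INR b) = 0 /\ (val b = val c \/ val b = val e)).
    by case: s2 => [h|[h1 h2]]; [left; lra | right].
  have t3 : 1 * cub p0 p1 p2 p3 (INR a + lf (INR a) (INR b)) < 0 by lra.
  have t4 : 1 * cub p0 p1 p2 p3 (INR b + rg (INR a) (INR b)) < 0 by lra.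
  have [h h'] := Ed_side hab t1 t2 t3 t4 hv; split => //; lra.
- move=> v hv.
  have t1 : -1 * cub p0 p1 p2 p3 (INR c) < 0 \/ (cub p0 p1 p2 p3 (INR c) = 0 /\ (val c = val a \/ val c = val b)).
    by case: s5 => [h|[h1 h2]]; [left; lra | right].
  have t2 : -1 * cub p0 p1 p2 p3 (INR e) < 0 \/ (cub p0 p1 p2 p3 (INR e) = 0 /\ (val e = val a \/ val e = val b)).
    by case: s6 => [h|[h1 h2]]; [left; lra | right].
  have t3 : -1 * cub p0 p1 p2 p3 (INR c + lf (INR c) (INR e)) < 0 by lra.
  have t4 : -1 * cub p0 p1 p2 p3 (INR e + rg (INR c) (INR e)) < 0 by lra.
  have [h h'] := Ed_side hce t1 t2 t3 t4 hv; split => //; lra.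
Qed.

Definition EdSet : {set {set VT}} :=
  [set Ed ab.1 ab.2 | ab in [pred ab : 'I_m * 'I_m | (ab.1 < ab.2)%N]].

Lemma EdSet_uni e : e \in EdSet -> #|e| = d'.+4.
Proof. by move=> /imsetP [[a b] hab ->]; apply: card_Ed. Qed.

Definition HT : hypergraph d'.+4 := @Hypergraph d'.+4 VT EdSet EdSet_uni.

Lemma HT_embed : @is_embedding d d'.+4 HT phiT.
Proof.
split.
  move=> e /imsetP [[a b] hab ->] /=.
  split.
    exists (Ed a b); split => //; split; [exact: Ed_indep | exact: card_Ed].
  by move=> T sT _; rewrite -(card_Ed hab); apply: subset_leq_card.
move=> e1 e2 /imsetP [[a b] hab ->] /imsetP [[c e] hce ->] /=.
exact: Ed_sep.
Qed.


Definition Cl : {set VT} := [set vC i | i in 'I_m] :|: Aps.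

Lemma card_Cl : #|Cl| = (m + d')%N.
Proof.
rewrite /Cl cardsU.
have -> : [set vC i | i in 'I_m] :&: Aps = set0.
  apply/setP => v; rewrite !inE in_Aps; apply/negP => /andP[/imsetP [i _ ->]] //.
rewrite cards0 subn0 !card_imset ?card_ord //.
- by move=> x y [].
- by move=> x y [].
Qed.

Lemma pair_edge (i j : 'I_m) : i != j -> exists2 e, e \in EdSet & (vC i \in e) && (vC j \in e).
Proof.
move=> hij; case: (ltngtP i j) => h.
- exists (Ed i j); first by apply/imsetP; exists (i, j).
  by rewrite !inE /= !eqxx ?orbT.
- exists (Ed j i); first by apply/imsetP; exists (j, i).
  by rewrite !inE /= !eqxx ?orbT.
- by move: hij => /eqP []; apply: val_inj.
Qed.

Lemma partner (hm : (1 < m)%N) (i : 'I_m) : exists j : 'I_m, i != j.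
Proof.
have h0 : (0 < m)%N by apply: ltn_trans hm.
case: (eqVneq (val i) 0%N) => h.
- exists (Ordinal hm); by rewrite -val_eqE h.
- exists (Ordinal h0); by rewrite -val_eqE.
Qed.

Lemma common_edge (hm : (1 < m)%N) u v : u \in Cl -> v \in Cl -> u != v ->
  exists2 e, e \in EdSet & (u \in e) && (v \in e).
Proof.
have h0 : (0 < m)%N by apply: ltn_trans hm.
have Ap_in : forall j e, e \in EdSet -> vA j \in e.
  by move=> j e /imsetP [ab _ ->]; rewrite inE.
rewrite !inE !in_Aps => /orP[/imsetP [i _ ->]|hu] /orP[/imsetP [i' _ ->]|hv] huv.
- by apply: pair_edge; rewrite eqC in huv.
- have [j hj] := partner hm i; have [e he H] := pair_edge hj.
  have [j' ->] := isA_ex hv; exists e => //; rewrite Ap_in // andbT; by case/andP: H.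
- have [j hj] := partner hm i'; have [e he H] := pair_edge hj.
  have [j' ->] := isA_ex hu; exists e => //; rewrite Ap_in //=; by case/andP: H.
- have hlt : (0 < 1)%N by [].
  exists (Ed (Ordinal h0) (Ordinal hm)); first by apply/imsetP; exists (Ordinal h0, Ordinal hm).
  have [j ->] := isA_ex hu; have [j' ->] := isA_ex hv; by rewrite !inE.
Qed.

Lemma chi_HT (hm : (1 < m)%N) : (m + d' <= chi_s HT)%N.
Proof.
have [hc _] := chi_sP HT.
move: hc => /existsP [kappa /forall_inP Hk].
rewrite -card_Cl -[X in (_ <= X)%N]card_ord.
apply: leq_card_in => u v hu hv huv; apply/eqP; apply/negP => /negP nuv.
have [e he /andP[ue ve]] := common_edge hm hu hv nuv.
have := Hk e he => /eqP E.
have inj : {in e &, injective kappa} by apply/imset_injP; rewrite E (EdSet_uni he).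
by move: (inj u v ue ve huv) => /eqP; rewrite (negbTE nuv).
Qed.

Lemma card_XT : #|{: XT}| = (m * m - m)%N.
Proof.
rewrite card_sig.
have hD : #|[pred q : 'I_m * 'I_m | q.1 == q.2]| = m.
  rewrite -[RHS](card_ord m) -(card_imset (mem 'I_m) (f := fun i : 'I_m => (i, i))); last first.
    by move=> x y [].
  apply: eq_card => [[x y]]; rewrite inE /=; apply/eqP/imsetP => [->|[i _ [-> ->]]] //.
  by exists y.
have := cardC [pred q : 'I_m * 'I_m | q.1 == q.2]; rewrite hD card_prod card_ord => H.
rewrite -H addKn; apply: eq_card => q; by rewrite !inE.
Qed.

Lemma card_VT : #|{: VT}| = (m * m - m + m + d' + p)%N.
Proof.
rewrite /VT !card_sum card_XT !card_ord; rewrite (addnC m (m * m - m)%N); done.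
Qed.

End Constr.

End Helpers.
Import Helpers.
From mathcomp Require Import zify.


Theorem mainTheorem10 (d k n : nat) :
  3 <= d -> d.+1 <= n -> 2 <= k -> k <= d.+1 ->
  chi_s_dk d d.+1 n <= chi_s_dk d k n /\
  Nat.sqrt (n - d + 3) + d - 3 <= chi_s_dk d d.+1 n.
Proof.
move=> hd hn hk hkd; split; first exact: part1.
case: d hd hn hkd => [|[|[|d']]] // _ hn _.
set m := Nat.sqrt (n - d'.+3 + 3).
have hm2 : (1 < m)%N.
  have h4 : (4 <= n - d'.+3 + 3)%N by lia.
  have h := Nat.sqrt_le_mono 4 (n - d'.+3 + 3) ltac:(lia).
  have e4 : Nat.sqrt 4 = 2 by reflexivity.
  rewrite e4 -/m in h; lia.
have hmm : (m * m <= n - d'.+3 + 3)%N.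
  have := Nat.sqrt_spec (n - d'.+3 + 3); rewrite -/m; lia.
pose p := (n - (m * m + d'))%N.
have hc : #|{: VT m d' p}| = n.
  rewrite card_VT /p.
  have : (m <= m * m)%N by nia.
  lia.
have -> : (Nat.sqrt (n - d'.+3 + 3) + d'.+3 - 3 = m + d')%N by rewrite -/m; lia.
apply: leq_trans (@chi_HT m d' p hm2) _.
apply: (@chi_s_dk_ge d'.+3 d'.+4 n (HT m d' p)) => //.
by exists (@phiT m d' p); apply: HT_embed.
Qed.
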